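(* Let $k=\mathbb{F}_q$ with $q$ odd, $q>3$, $n\ge1$, $A=M_{2n}(k)$, $J_{2n}=\begin{pmatrix}0&I_n\\-I_n&0\end{pmatrix}$, $a^{\sim}=J_{2n}a^tJ_{2n}^{-1}$. Let $V=k^{2n}$ (row vectors) with $[x,y]=x\,(yJ_{2n})^{t}$, let $M=V^2$ with right $A$-action $(x,y)a=(xa,ya)$, let $\psi$ be a nontrivial character of $(k,+)$, and define $\chi((x,y),(v,z))=\psi([x,z]-[y,v])$ and $\gamma(u,(x,y))=\psi([xu,y])$ for $u\in A$ with $u^{\sim}=u$. Let $\mathrm{U}(\gamma,\chi)$ be the group of all $A$-linear automorphisms $\beta$ of $M$ such that $\gamma(u,\beta(m))=\gamma(u,m)$ for all $u\in A$ with $u^\sim=u$ and all $m\in M$, and $\chi(\beta(m),\beta(m'))=\chi(m,m')$ for all $m,m'\in M$. Then $\mathrm{U}(\gamma,\chi)\cong\mathrm{SL}_2(k)$. *)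

(* Defs.v *)
From HB Require Import structures.
From mathcomp Require Import all_boot all_order all_algebra all_field.
Set Implicit Arguments. Unset Strict Implicit. Unset Printing Implicit Defensive.
Import Order.TTheory GRing.Theory Num.Theory.
Local Open Scope ring_scope.

Section Defs.
Variables (k : fieldType) (n : nat).

Definition Jmat : 'M[k]_(n + n) := block_mx 0 1%:M (- 1%:M) 0.

Definition tildemx (a : 'M[k]_(n + n)) : 'M[k]_(n + n) :=
  Jmat *m a^T *m invmx Jmat.

Definition sform (x y : 'rV[k]_(n + n)) : k := (x *m (y *m Jmat)^T) 0 0.

Definition Mod := ('rV[k]_(n + n) * 'rV[k]_(n + n))%type.

Definition mact (m : Mod) (a : 'M[k]_(n + n)) : Mod := (m.1 *m a, m.2 *m a).

Definition madd (m m' : Mod) : Mod := (m.1 + m'.1, m.2 + m'.2).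

Definition chiM (psi : k -> algC) (m m' : Mod) : algC :=
  psi (sform m.1 m'.2 - sform m.2 m'.1).

Definition gammaM (psi : k -> algC) (u : 'M[k]_(n + n)) (m : Mod) : algC :=
  psi (sform (m.1 *m u) m.2).

Definition A_linear_aut (b : Mod -> Mod) : Prop :=
  [/\ bijective b,
      (forall m m', b (madd m m') = madd (b m) (b m')) &
      (forall m a, b (mact m a) = mact (b m) a)].

Definition in_U (psi : k -> algC) (b : Mod -> Mod) : Prop :=
  [/\ A_linear_aut b,
      (forall u, tildemx u = u -> forall m, gammaM psi u (b m) = gammaM psi u m) &
      (forall m m', chiM psi (b m) (b m') = chiM psi m m')].

End Defs.

Definition nontriv_add_char (k : fieldType) (psi : k -> algC) : Prop :=
  [/\ (forall a b, psi (a + b) = psi a * psi b),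
      (forall a, psi a != 0) &
      exists a, psi a != 1].

(* Main.v *)
From HB Require Import structures.
From mathcomp Require Import all_boot all_order all_algebra all_field.
From mathcomp Require Import ring.
From mathcomp Require Import fingroup cyclic.
Require Import Defs.
Set Implicit Arguments. Unset Strict Implicit.
Import Order.TTheory GRing.Theory Num.Theory.
Local Open Scope ring_scope.

Definition i1 : 'I_2 := @Ordinal 2 1 isT.

Lemma lift00 : lift ord0 (ord0 : 'I_1) = i1 :> 'I_2.
Proof. exact: val_inj. Qed.

Lemma lift10 : lift i1 (ord0 : 'I_1) = ord0 :> 'I_2.
Proof. exact: val_inj. Qed.

Lemma det22 (k : comRingType) (g : 'M[k]_2) :
  \det g = g ord0 ord0 * g i1 i1 - g ord0 i1 * g i1 ord0.
Proof.
rewrite (expand_det_row _ ord0) !big_ord_recl big_ord0 /cofactor !det_mx11 !mxE /=.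
rewrite !lift00 lift10 /bump /= expr0 expr1; ring.
Qed.

Section Main.
Variables (k : fieldType) (n : nat).
Local Notation V := 'rV[k]_(n + n).

Lemma sformDl (a b : k) (x y z : V) :
  sform (a *: x + b *: y) z = a * sform x z + b * sform y z.
Proof. by rewrite /sform mulmxDl -!scalemxAl !mxE. Qed.

Lemma sformDr (a b : k) (x y z : V) :
  sform z (a *: x + b *: y) = a * sform z x + b * sform z y.
Proof.
by rewrite /sform mulmxDl !linearD /= -!scalemxAl !linearZ /= !mxE.
Qed.

Definition fmap (g : 'M[k]_2) (m : Mod k n) : Mod k n :=
  (g ord0 ord0 *: m.1 + g ord0 i1 *: m.2, g i1 ord0 *: m.1 + g i1 i1 *: m.2).

Lemma mul22 (g h : 'M[k]_2) i j :
  (g *m h) i j = g i ord0 * h ord0 j + g i i1 * h i1 j.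
Proof. by rewrite !mxE !big_ord_recl big_ord0 lift00 addr0. Qed.

Lemma fmapM g h m : fmap (g *m h) m = fmap g (fmap h m).
Proof.
rewrite /fmap /=; congr (_, _); rewrite !mul22; apply/rowP => j; rewrite !mxE; ring.
Qed.

Lemma fmap1 m : fmap 1%:M m = m.
Proof.
case: m => x y; rewrite /fmap /=; congr (_, _); apply/rowP=> j; rewrite !mxE /=; ring.
Qed.

Lemma fmapD g m m' : fmap g (madd m m') = madd (fmap g m) (fmap g m').
Proof.
rewrite /fmap /madd /=; congr (_, _); apply/rowP => j; rewrite !mxE; ring.
Qed.

Lemma fmapA g m a : fmap g (mact m a) = mact (fmap g m) a.
Proof.
by rewrite /fmap /mact /= !mulmxDl -!scalemxAl.
Qed.

Lemma fmap_chi psi g m m' :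
  chiM psi (fmap g m) (fmap g m') = psi (\det g * (sform m.1 m'.2 - sform m.2 m'.1)).
Proof.
rewrite /chiM /fmap /= !sformDl !sformDr det22; congr psi; ring.
Qed.


Local Notation J := (Jmat k n).

Lemma JJ : J *m J = - 1%:M.
Proof.
rewrite /Jmat mulmx_block !mulmx0 !mul0mx !mulmx1 !mul1mx !addr0 !add0r.
by rewrite (scalar_mx_block n n 1) opp_block_mx oppr0.
Qed.

Lemma Junit : J \in unitmx.
Proof. by case: (@mulmx1_unit _ _ J (- J)); rewrite // mulmxN JJ opprK. Qed.

Lemma JT : J^T = - J.
Proof.
by rewrite /Jmat tr_block_mx !trmx0 trmx1 linearN /= trmx1 opp_block_mx !oppr0 opprK.
Qed.

Lemma sformE (x y : V) : sform x y = - (x *m J *m y^T) 0 0.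
Proof. by rewrite /sform trmx_mul JT mulNmx mulmxN mulmxA mxE. Qed.

Lemma tilde_comm u : tildemx u = u -> u *m J = J *m u^T.
Proof. by move=> h; rewrite -{1}h /tildemx -mulmxA mulVmx ?Junit // mulmx1. Qed.

Lemma mx11T (M : 'M[k]_1) : M 0 0 = M^T 0 0.
Proof. by rewrite mxE. Qed.

Lemma skew u (x y : V) : tildemx u = u -> sform (y *m u) x = - sform (x *m u) y.
Proof.
move=> h; rewrite !sformE opprK mx11T !trmx_mul !trmxK JT mulNmx mulmxN.
have oppE : forall M : 'M[k]_1, (- M) 0 0 = - M 0 0 by move=> M; rewrite mxE.
by rewrite oppE opprK !mulmxA -(mulmxA x J) -tilde_comm // !mulmxA.
Qed.


Lemma alt u (x : V) : (2%:R : k) != 0 -> tildemx u = u -> sform (x *m u) x = 0.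
Proof.
move=> h2 hu; have := skew x x hu => e.
have : 2%:R * sform (x *m u) x = 0 by rewrite mulr_natl mulr2n {1}e addNr.
by move/eqP; rewrite mulf_eq0 (negbTE h2) => /eqP.
Qed.

Lemma fmap_gamma psi u g m : (2%:R : k) != 0 -> \det g = 1 -> tildemx u = u ->
  gammaM psi u (fmap g m) = gammaM psi u m.
Proof.
move=> h2 hd hu; rewrite /gammaM /fmap /= mulmxDl -!scalemxAl sformDl !sformDr.
rewrite !alt // (skew m.1 m.2 hu); congr psi.
move: hd; rewrite det22 => hd.
transitivity ((g ord0 ord0 * g i1 i1 - g ord0 i1 * g i1 ord0) * sform (m.1 *m u) m.2).
  ring.
by rewrite hd mul1r.
Qed.

Lemma sform0l (y : V) : sform 0 y = 0.
Proof. by rewrite /sform mul0mx mxE. Qed.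

End Main.

Section E.
Variables (k : fieldType) (n : nat) (i0 : 'I_(n + n)).
Local Notation V := 'rV[k]_(n + n).
Local Notation e0 := (delta_mx 0 i0 : V).

Lemma e0e0T : e0 *m e0^T = 1%:M.
Proof.
rewrite trmx_delta mul_delta_mx; apply/matrixP => i j.
by rewrite !ord1 !mxE.
Qed.

Lemma decomp (x : V) : e0 *m (e0^T *m x) = x.
Proof. by rewrite mulmxA e0e0T mul1mx. Qed.

Lemma phi_scal (p x : V) : p *m (e0^T *m x) = ((p *m e0^T) 0 0) *: x.
Proof. by rewrite mulmxA {1}[p *m _]mx11_scalar mul_scalar_mx. Qed.

Lemma sform_e0 t : sform (t *: e0) (e0 *m invmx (Jmat k n)) = t.
Proof.
rewrite /sform -mulmxA mulVmx ?Junit // mulmx1 -scalemxAl e0e0T !mxE /=.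
by rewrite mulr1.
Qed.

Lemma ord2 (i : 'I_2) : i = ord0 \/ i = i1.
Proof. by case: i => [[|[|//]]] Hi; [left|right]; apply: val_inj. Qed.

End E.

Lemma psi_const (k : fieldType) (psi : k -> algC) (c : k) :
  nontriv_add_char psi -> (forall t, psi (c * t) = psi t) -> c = 1.
Proof.
case=> hadd hnz [a ha] hc; apply/eqP; apply/negPn/negP => hc1.
have hc1' : c - 1 != 0 by rewrite subr_eq0.
pose t := a / (c - 1).
have e : c * t = t + a.
  by rewrite /t; field; rewrite hc1'.
have := hc t; rewrite e hadd => h.
move: ha; rewrite -[X in X != _](mulKf (hnz t)) h mulVf ?hnz //. by move/negP.
Qed.


Lemma two_neq0 (k : finFieldType) : odd #|k| -> (2%:R : k) != 0.
Proof.
move=> hodd; apply/negP => /eqP h2.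
have h : (#[(1%R : k)]%g %| 2)%N.
  by rewrite order_dvdn FinRing.zmodXgE h2.
have h1 : #[(1%R : k)]%g != 1%N.
  by rewrite order_eq1; apply: oner_neq0.
have hd := @order_dvdG _ [set: k] (1%R : k) (in_setT _).
rewrite cardsT in hd.
have e : #[(1%R : k)]%g = 2%N.
  move: h h1 (dvdn_leq (isT : (0 < 2)%N) h); case: (#[(1%R : k)]%g) => [|[|[|m]]] //.
rewrite e in hd.
by move: hd; rewrite dvdn2 hodd.
Qed.

Theorem mainTheorem5 (k : finFieldType) (n : nat) (psi : k -> algC) :
  odd #|k| -> (3 < #|k|)%N -> (1 <= n)%N -> nontriv_add_char psi ->
  exists f : 'M[k]_2 -> Mod k n -> Mod k n,
    [/\ (forall g, \det g = 1 -> in_U psi (f g)),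
        (forall b, in_U psi b -> exists g, \det g = 1 /\ forall m, f g m = b m),
        (forall g h, \det g = 1 -> \det h = 1 ->
           (forall m, f g m = f h m) -> g = h) &
        (forall g h, \det g = 1 -> \det h = 1 ->
           forall m, f (g *m h) m = f g (f h m))].
Proof.
move=> hodd _ hn hpsi.
have h2 := @two_neq0 k hodd.
pose i0 : 'I_(n + n) := @Ordinal (n + n) 0 (leq_trans hn (leq_addr n n)).
pose e0 : 'rV[k]_(n + n) := delta_mx 0 i0.
exists (@fmap k n); split.
- move=> g hg; split; [split | | ].
  + exists (fmap (invmx g)) => m; rewrite -fmapM ?mulVmx ?mulmxV ?fmap1 //;
      by rewrite unitmxE hg unitr1.
  + exact: fmapD.
  + exact: fmapA.
  + by move=> u hu m; apply: fmap_gamma.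
  + by move=> m m'; rewrite fmap_chi hg mul1r.
- move=> b [[_ hD hA] _ hchi].
  pose p := b (e0, 0); pose q := b (0, e0).
  pose phi (v : 'rV[k]_(n + n)) := (v *m e0^T) 0 0.
  pose g : 'M[k]_2 := \matrix_(i < 2, j < 2)
     if i == ord0 then (if j == ord0 then phi p.1 else phi q.1)
     else (if j == ord0 then phi p.2 else phi q.2).
  have hfg : forall m, fmap g m = b m.
    case=> x y.
    have E : (x, y) = madd (mact (e0, 0) (e0^T *m x)) (mact (0, e0) (e0^T *m y)).
      by rewrite /madd /mact /= !mul0mx !decomp addr0 add0r.
    rewrite [in RHS]E hD !hA -/p -/q /fmap /mact /madd /= !phi_scal !mxE /=.
    by rewrite /phi !mxE.
  exists g; split => //.
  apply: (psi_const hpsi) => t.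
  have := hchi (t *: e0, 0) (0, e0 *m invmx (Jmat k n)).
  by rewrite -!hfg fmap_chi /chiM /= sform_e0 sform0l subr0 => ->.
- move=> g h _ _ H.
  have E m := congr1 (fun p : Mod k n => (p.1 0 i0, p.2 0 i0)) (H m).
  have E1 := E (e0, 0); have E2 := E (0, e0).
  move: E1 E2; rewrite /fmap /= !mxE /= !mulr1 !mulr0 !addr0 !add0r.
  case=> e1 e2 [e3 e4].
  apply/matrixP => i j.
  by case: (ord2 i) => ->; case: (ord2 j) => ->.
- by move=> g h _ _ m; apply: fmapM.
Qed.
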